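(* For any positive integers $r$ and $\ell$ there exists an integer $\delta=\delta(r,\ell)$ such that the following holds. Let $G$ be a bipartite graph with bipartition $(X,Y)$ such that $X$ contains no pair of twins and $\eta_G(m)\le r\cdot m$ for every positive integer $m$. Then for every $Y'\subseteq Y$ with $|Y'|\ge\max\{2,|Y|/\ell\}$ there exist distinct vertices $u,v\in Y'$ which are $\delta$-near-twins in $G$.
   Context: $N(v)$ is the open neighborhood of $v$. The neighborhood complexity of $G$ is $\eta_G(m)=\max_A|\{N(v)\cap A: v\in V(G)\}|$ over all $m$-element subsets $A\subseteq V(G)$. Two vertices $u,v$ are twins if $N(u)=N(v)$, and are $\delta$-near-twins if $|N(u)\,\Delta\,N(v)|\le\delta$, where $\Delta$ is symmetric difference. *)

(* Defs.v *)
From mathcomp Require Import all_boot.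
Set Implicit Arguments. Unset Strict Implicit. Unset Printing Implicit Defensive.

Definition simple_graph (T : finType) (e : rel T) : Prop :=
  symmetric e /\ irreflexive e.

Definition nbhd (T : finType) (e : rel T) (v : T) : {set T} := [set w | e v w].

Definition bipartition (T : finType) (e : rel T) (X Y : {set T}) : Prop :=
  [/\ X :&: Y = set0, X :|: Y = setT &
      forall u v, e u v -> (u \in X /\ v \in Y) \/ (u \in Y /\ v \in X)].

(* eta_G(m) = max over m-element A of |{N(v) cap A : v in V(G)}|  (0 if no such A) *)
Definition nbhd_complexity (T : finType) (e : rel T) (m : nat) : nat :=
  \max_(A : {set T} | #|A| == m) #|[set nbhd e v :&: A | v : T]|.

Definition twins (T : finType) (e : rel T) (u v : T) : Prop :=
  nbhd e u = nbhd e v.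

Definition symdiff (T : finType) (A B : {set T}) : {set T} :=
  (A :\: B) :|: (B :\: A).

Definition near_twins (T : finType) (e : rel T) (delta : nat) (u v : T) : Prop :=
  #|symdiff (nbhd e u) (nbhd e v)| <= delta.

(* Main.v *)
Require Import Defs.
From mathcomp Require Import all_boot zify.
Set Implicit Arguments. Unset Strict Implicit. Unset Printing Implicit Defensive.

Section VCsec.
Variable T : finType.
Implicit Types (H : {set {set T}}) (U V W Z : {set T}).

Definition shatters H V := forall Z, Z \subset V -> exists2 W, W \in H & W :&: V = Z.
Definition ey H (y : T) := #|[set U in H | (y \notin U) && (y |: U \in H)]|.
Definition Ecount H := \sum_y ey H y.

Lemma ecount_empty_cover H : cover H = set0 -> Ecount H = 0.
Proof.
move=> cH; apply/eqP; rewrite sum_nat_eq0; apply/forallP => y; apply/implyP=> _.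
rewrite cards_eq0; apply/eqP/setP => U; rewrite !inE.
apply/negbTE; apply/negP => /andP [_ /andP [_ yU]].
have : y \in cover H by apply/bigcupP; exists (y |: U) => //; rewrite setU11.
by rewrite cH inE.
Qed.

Section Step.
Variables (H : {set {set T}}) (x : T).
Let H0 := [set U :\ x | U in H].
Let D := [set U in H | (x \notin U) && (x |: U \in H)].

Lemma card_split : #|H| = #|H0| + #|D|.
Proof.
set H1 := [set U in H | x \notin U]; set H2 := [set U in H | x \in U].
set I2 := [set U :\ x | U in H2].
have cH : #|H| = #|H1| + #|H2|.
  rewrite -(cardsID [set U : {set T} | x \in U] H) addnC; congr (_ + _); apply: eq_card => U;
  by rewrite !inE // andbC.
have cI : #|I2| = #|H2|.
  apply: card_in_imset => U W; rewrite !inE => /andP[_ xU] /andP[_ xW] E.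
  by rewrite -(setD1K xU) -(setD1K xW) E.
have eH0 : H0 = H1 :|: I2.
  apply/setP => U; apply/imsetP/idP.
    move=> [W WH ->]; rewrite inE; case: (boolP (x \in W)) => xW.
      by apply/orP; right; apply/imsetP; exists W => //; rewrite inE WH.
    have -> : W :\ x = W by apply/setP=> z; rewrite !inE; case: eqP => // ->; rewrite (negbTE xW).
    by apply/orP; left; rewrite inE WH.
  rewrite inE => /orP [|/imsetP [W]]; rewrite !inE.
    move=> /andP [UH xU]; exists U => //; apply/setP => z; rewrite !inE.
    by case: eqP => // ->; rewrite (negbTE xU).
  by move=> /andP [WH _] ->; exists W.
have eD : H1 :&: I2 = D.
  apply/setP => U; rewrite !inE; apply/idP/idP.
    move=> /andP [/andP [UH xU] /imsetP [W]]; rewrite inE => /andP [WH xW] EU; subst U.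
    by rewrite !inE eqxx /= UH (setD1K xW) WH.
  move=> /andP [UH /andP [xU xUH]]; rewrite UH xU /=; apply/imsetP; exists (x |: U).
    by rewrite inE xUH setU11.
  by apply/setP => z; rewrite !inE; case: eqP => // ->; rewrite (negbTE xU).
by rewrite cH -cI -cardsUI eH0 eD.
Qed.

Lemma ey_split y : y != x -> ey H y <= ey H0 y + ey D y.
Proof.
move=> yx; rewrite /ey.
set S := [set U in H | (y \notin U) && (y |: U \in H)].
set S1 := [set U in S | x \notin U]; set S2 := [set U in S | x \in U].
set I2 := [set U :\ x | U in S2].
have cS : #|S| = #|S1| + #|S2|.
  rewrite -(cardsID [set U : {set T} | x \in U] S) addnC; congr (_ + _); apply: eq_card => U;
  by rewrite !inE // andbC.
have cI : #|I2| = #|S2|.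
  apply: card_in_imset => U W; rewrite !inE => /andP[_ xU] /andP[_ xW] E.
  by rewrite -(setD1K xU) -(setD1K xW) E.
have sub1 : S1 :|: I2 \subset [set U in H0 | (y \notin U) && (y |: U \in H0)].
  apply/subsetP => U; rewrite inE => /orP [|/imsetP [W]]; rewrite !inE.
    move=> /andP [/andP [UH /andP [yU yUH]] xU]; rewrite yU /=; apply/andP; split.
      apply/imsetP; exists U => //; apply/setP => z; rewrite !inE.
      by case: (z =P x) => // ->; rewrite (negbTE xU).
    apply/imsetP; exists (y |: U) => //; apply/setP => z; rewrite !inE.
    by case: (z =P x) => //= ->; rewrite (negbTE xU) eq_sym (negbTE yx).
  move=> /andP [/andP [WH /andP [yW yWH]] xW] ->; rewrite !inE yx (negbTE yW) /=; apply/andP; split.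
    by apply/imsetP; exists W.
  apply/imsetP; exists (y |: W) => //; apply/setP => z; rewrite !inE.
  by case: (z =P x) => //= ->; rewrite eq_sym (negbTE yx).
have sub2 : S1 :&: I2 \subset [set U in D | (y \notin U) && (y |: U \in D)].
  apply/subsetP => U; rewrite !inE => /andP [/andP [/andP [UH /andP [yU yUH]] xU] /imsetP [W]].
  rewrite !inE => /andP [/andP [WH /andP [yW yWH]] xW] EU; subst U.
  rewrite !inE eqxx /= in UH yU yUH xU *.
  rewrite UH yU yUH (setD1K xW) WH /=.
  have -> : x |: (y |: W :\ x) = y |: W.
    by apply/setP => z; rewrite !inE; case: (z =P x) => //= ->; rewrite xW orbT.
  by rewrite yWH eq_sym (negbTE yx).
rewrite cS -cI -[#|S1| + #|I2|]cardsUI; apply: leq_add; exact: subset_leq_card.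
Qed.

Lemma ecount_split : Ecount H <= Ecount H0 + #|D| + Ecount D.
Proof.
rewrite /Ecount (bigD1 x) //= (bigD1 x (P := predT)) //= (bigD1 x (P := predT)) //=.
have -> : ey H x = #|D| by [].
have : \sum_(i | i != x) ey H i <= \sum_(i | i != x) (ey H0 i + ey D i).
  by apply: leq_sum => i; apply: ey_split.
rewrite big_split /=; lia.
Qed.
End Step.

Lemma shatter_H0 H x V : shatters [set U :\ x | U in H] V -> shatters H V.
Proof.
move=> sh.
have xV : x \notin V.
  have [W /imsetP [W' _ ->] E] := sh V (subxx V).
  apply/negP => xV; have : x \in (W' :\ x) :&: V by rewrite E.
  by rewrite !inE eqxx.
move=> Z ZV; have [W /imsetP [W' W'H ->] E] := sh Z ZV.
exists W' => //; rewrite -E; apply/setP => z; rewrite !inE.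
by case: (z =P x) => //= ->; rewrite (negbTE xV) andbF.
Qed.

Lemma shatter_D H x V :
  shatters [set U in H | (x \notin U) && (x |: U \in H)] V -> shatters H (x |: V) /\ x \notin V.
Proof.
move=> sh.
have xV : x \notin V.
  have [W] := sh V (subxx V); rewrite inE => /andP [_ /andP [xW _]] E.
  apply/negP => xV; have : x \in W :&: V by rewrite E.
  by rewrite inE (negbTE xW).
split=> // Z ZV.
have ZV' : Z :\ x \subset V.
  apply/subsetP => z; rewrite !inE => /andP [zx zZ].
  by have := subsetP ZV z zZ; rewrite !inE (negbTE zx).
have [W] := sh _ ZV'; rewrite inE => /andP [WH /andP [xW xWH]] E.
case: (boolP (x \in Z)) => xZ.
  exists (x |: W) => //; apply/setP => z; rewrite !inE.
  case: (z =P x) => [->|zx] //=.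
  have Ez : (z \in W :&: V) = (z \in Z :\ x) by rewrite E.
  by move: Ez; rewrite !inE; move/eqP: zx => /negbTE ->.
exists W => //; apply/setP => z; rewrite !inE.
case: (z =P x) => [->|zx] /=; first by rewrite (negbTE xW) (negbTE xZ).
have Ez : (z \in W :&: V) = (z \in Z :\ x) by rewrite E.
by move: Ez; rewrite !inE => ->; case: (z =P x).
Qed.

Lemma vc_edges m : forall d H, #|cover H| <= m ->
  (forall V, #|V| = d.+1 -> ~ shatters H V) -> Ecount H <= d * #|H|.
Proof.
elim: m => [|m IH] d H cH nsh.
  by rewrite ecount_empty_cover // ; apply/eqP; rewrite -cards_eq0 -leqn0.
case: (set_0Vmem (cover H)) => [c0|[x xc]]; first by rewrite ecount_empty_cover.
set H0 := [set U :\ x | U in H].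
set D := [set U in H | (x \notin U) && (x |: U \in H)].
have cov0 : #|cover H0| <= m.
  rewrite -ltnS; apply: leq_trans cH; apply: proper_card; apply/properP; split.
    apply/subsetP => z /bigcupP [U /imsetP [W WH ->]]; rewrite inE => /andP [_ zW].
    by apply/bigcupP; exists W.
  exists x => //; apply/negP => /bigcupP [U /imsetP [W WH EU] xU].
  by move: xU; rewrite EU !inE eqxx.
have covD : #|cover D| <= m.
  rewrite -ltnS; apply: leq_trans cH; apply: proper_card; apply/properP; split.
    apply/subsetP => z /bigcupP [U]; rewrite inE => /andP [UH _] zU.
    by apply/bigcupP; exists U.
  exists x => //; apply/negP => /bigcupP [U]; rewrite inE => /andP [_ /andP [xU _]].
  by rewrite (negbTE xU).
have IH0 : Ecount H0 <= d * #|H0|.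
  by apply: IH => // V cV /shatter_H0; apply: nsh.
have := ecount_split H x; rewrite -/H0 -/D (card_split H x) -/H0 -/D.
case: d nsh IH0 => [|d] nsh IH0.
  have D0 : D = set0.
    apply/setP => U; rewrite inE; apply/negP; rewrite inE => /andP [UH /andP [xU xUH]].
    apply: (nsh [set x]); first by rewrite cards1.
    move=> Z; rewrite subset1 => /orP [] /eqP ->.
      by exists (x |: U) => //; apply/setP => z; rewrite !inE; case: (z =P x) => //=; rewrite andbF.
    exists U => //; apply/setP => z; rewrite !inE; case: (z =P x) => [->|]; by rewrite ?andbF ?(negbTE xU).
  rewrite D0 cards0 (@ecount_empty_cover set0); last by rewrite /cover; apply/setP => z; rewrite inE; apply/bigcupP => -[U]; rewrite inE.
  by rewrite mul0n in IH0 *; lia.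
have IHD : Ecount D <= d * #|D|.
  apply: IH => // V cV shV; have [sh xV] := shatter_D shV.
  by apply: (nsh (x |: V)) => //; rewrite cardsU1 xV cV.
rewrite mulnDr mulSn; lia.
Qed.
End VCsec.

Lemma card_sum (I : finType) (A : {set I}) (P : pred I) :
  #|[set y in A | P y]| = \sum_(y in A) P y.
Proof.
rewrite -sum1_card big_mkcond [RHS]big_mkcond; apply: eq_bigr => y _.
by rewrite inE; case: (y \in A); case: (P y).
Qed.

Lemma sum_mem (I : finType) (S : {set I}) : \sum_x (x \in S : nat) = #|S|.
Proof. by rewrite -sum1_card [RHS]big_mkcond; apply: eq_bigr => x _; case: (x \in S). Qed.

Lemma sum_lt_min k c : \sum_(i < k) (i < c : nat) = minn c k.
Proof.
elim: k => [|k IH]; first by rewrite big_ord0; lia.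
rewrite big_ord_recr /= IH; case: (ltnP k c) => kc /=; lia.
Qed.

Lemma sum_lt k c : c <= k -> \sum_(i < k) (i < c : nat) = c.
Proof. by move=> ck; rewrite sum_lt_min; lia. Qed.

Lemma minn_sum a b k : a <= k -> b <= k ->
  minn a b = \sum_(i < k) ((i < a) && (i < b) : nat).
Proof.
move=> ak bk; rewrite -(sum_lt (c := minn a b) (k := k)); last by lia.
by apply: eq_bigr => i _; rewrite leq_min.
Qed.

Section Graph.
Variables (T : finType) (N : T -> {set T}) (Y' : {set T}).

Definition w (B U : {set T}) := #|[set y in Y' | N y :&: B == U]|.
Definition term (B : {set T}) (x : T) :=
  \sum_(U : {set T} | x \notin U) minn (w B U) (w B (x |: U)).

Lemma w_le B U : w B U <= #|Y'|.
Proof. by apply: subset_leq_card; apply/subsetP => y; rewrite inE => /andP []. Qed.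

Lemma sum_w B : \sum_U w B U = #|Y'|.
Proof.
under eq_bigr => U _ do rewrite /w card_sum.
rewrite exchange_big /= -sum1_card; apply: eq_bigr => y _.
by rewrite (bigD1 (N y :&: B)) //= eqxx big1 // => U; rewrite eq_sym => /negbTE ->.
Qed.

Lemma upper d B :
  (forall V : {set T}, #|V| = d.+1 -> #|[set N y :&: V | y in Y']| < 2 ^ d.+1) ->
  \sum_x term B x <= d * #|Y'|.
Proof.
move=> hyp.
pose Hi (i : nat) := [set U : {set T} | i < w B U].
have E1 : forall x, term B x = \sum_(i < #|Y'|) ey (Hi i) x.
  move=> x; rewrite /term.
  under eq_bigr => U _ do rewrite (minn_sum (k := #|Y'|) (w_le _ _) (w_le _ _)).
  rewrite exchange_big /=; apply: eq_bigr => i _.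
  rewrite /ey card_sum big_mkcond [RHS]big_mkcond /=; apply: eq_bigr => U _.
  by rewrite !inE; case: (x \in U); case: (i < w B U); case: (i < w B (x |: U)).
have E2 : \sum_x term B x = \sum_(i < #|Y'|) Ecount (Hi i).
  by rewrite /Ecount exchange_big /=; apply: eq_bigr => x _; rewrite E1.
have E3 : \sum_(i < #|Y'|) #|Hi i| = #|Y'|.
  rewrite -[RHS](sum_w B).
  transitivity (\sum_(i < #|Y'|) \sum_U (U \in Hi i : nat)); first by apply: eq_bigr => i _; rewrite sum_mem.
  rewrite exchange_big /=; apply: eq_bigr => U _.
  rewrite -(sum_lt (c := w B U) (w_le _ _)); apply: eq_bigr => i _; by rewrite inE.
rewrite E2; apply: (@leq_trans (\sum_(i < #|Y'|) d * #|Hi i|)); last by rewrite -big_distrr /= E3.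
apply: leq_sum => i _.
apply: (@vc_edges _ #|cover (Hi i)|) => // V cV sh.
have sVB : V \subset B.
  have [W] := sh V (subxx V); rewrite inE => iw EV.
  have : 0 < w B W by lia.
  rewrite /w card_gt0 => /set0Pn [y]; rewrite inE => /andP [_ /eqP EW].
  by rewrite -EV -EW -setIA subIset // subsetIl orbT.
have : 2 ^ d.+1 <= #|[set N y :&: V | y in Y']|.
  rewrite -cV -card_powerset; apply: subset_leq_card; apply/subsetP => Z.
  rewrite inE => ZV; have [W] := sh Z ZV; rewrite inE => iw EZ.
  have : 0 < w B W by lia.
  rewrite /w card_gt0 => /set0Pn [y]; rewrite inE => /andP [yY /eqP EW].
  apply/imsetP; exists y => //; rewrite -EZ -EW -setIA; congr (_ :&: _).
  by apply/setP => z; rewrite inE; case: (boolP (z \in V)) => zV; rewrite ?andbF // (subsetP sVB).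
by have := hyp V cV; lia.
Qed.
End Graph.

Definition symd (T : finType) (A B : {set T}) : {set T} := (A :\: B) :|: (B :\: A).

Lemma card_symd (T : finType) (A B : {set T}) : #|symd A B| = #|A :\: B| + #|B :\: A|.
Proof.
rewrite /symd -cardsUI; have -> : (A :\: B) :&: (B :\: A) = set0.
  by apply/setP => z; rewrite !inE; case: (z \in A); case: (z \in B); rewrite ?andbF.
by rewrite cards0 addn0.
Qed.

Lemma card_part (I : finType) (Q : {set I}) (P : pred I) :
  #|[set y in Q | ~~ P y]| + #|[set y in Q | P y]| = #|Q|.
Proof.
rewrite -(cardsID [set y | P y] Q) addnC; congr (_ + _); apply: eq_card => y; rewrite !inE //.
by rewrite andbC.
Qed.

Section Low.
Variables (T : finType) (N : T -> {set T}) (Y' : {set T}) (delta : nat).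
Hypothesis sep : forall y y', y \in Y' -> y' \in Y' -> y != y' -> delta < #|symd (N y) (N y')|.
Variable A : {set T}.

Let Q U := [set y in Y' | N y :&: A == U].
Let a U x := #|[set y in Q U | x \notin N y]|.
Let b U x := #|[set y in Q U | x \in N y]|.

Lemma L1 x : x \notin A -> term N Y' (x |: A) x = \sum_U minn (a U x) (b U x).
Proof.
move=> xA; rewrite /term [RHS](bigID (fun U : {set T} => x \notin U)) /=.
rewrite [X in _ = _ + X]big1 ?addn0; last first.
  move=> U; rewrite negbK => xU; rewrite /a.
  apply/eqP; rewrite -leqn0 geq_min leqn0 cards_eq0; apply/orP; left; apply/eqP.
  apply/setP => y; rewrite !inE; apply/negP => /andP [/andP [_ /eqP E] _].
  by move: xU; rewrite -E inE (negbTE xA) andbF.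
apply: eq_bigr => U xU; congr minn; apply: eq_card => y; rewrite !inE.
  case xN : (x \in N y) => /=.
    rewrite andbF; apply/negP => /andP [_ /eqP E].
    by move: xU; rewrite -E !inE xN eqxx.
  rewrite andbT; congr (_ && _); congr (_ == _); apply/setP => z; rewrite !inE.
  by case: (z =P x) => //= ->; rewrite xN.
case xN : (x \in N y) => /=.
  rewrite andbT; have -> : N y :&: (x |: A) = x |: (N y :&: A).
    by apply/setP => z; rewrite !inE; case: (z =P x) => //= ->; rewrite xN.
  congr (_ && _); apply/eqP/eqP => [E|->] //.
  have xNA : x \notin N y :&: A by rewrite inE (negbTE xA) andbF.
  by rewrite -(setU1K xNA) E setU1K.
rewrite andbF; apply/negP => /andP [_ /eqP E].
have : x \in x |: U by rewrite setU11.
by rewrite -E !inE xN.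
Qed.


Lemma minn_mul m n : m * n <= minn m n * (m + n).
Proof. rewrite /minn; case: ifP => h; nia. Qed.

Lemma L2 U : delta.+1 * (#|Q U| - 1) <= 2 * \sum_(x | x \notin A) minn (a U x) (b U x).
Proof.
set q := #|Q U|.
case: (posnP q) => [->|qpos]; first by rewrite muln0.
rewrite -(leq_pmul2l qpos).
have S1 : \sum_(x | x \notin A) a U x * b U x <= q * \sum_(x | x \notin A) minn (a U x) (b U x).
  rewrite big_distrr /=; apply: leq_sum => x _.
  rewrite /q -(card_part (Q U) (fun y => x \in N y)) [X in _ <= X]mulnC; exact: minn_mul.
have S2 : \sum_(x | x \notin A) a U x * b U x = \sum_(y in Q U) \sum_(y' in Q U) #|N y' :\: N y|.
  under eq_bigr => x _ do rewrite /a /b !card_sum big_distrl /=.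
  under eq_bigr => x _ do under eq_bigr => y _ do rewrite big_distrr /=.
  rewrite exchange_big /=; apply: eq_bigr => y yQ.
  rewrite exchange_big /=; apply: eq_bigr => y' y'Q.
  rewrite -sum_mem [RHS](bigID (fun x => x \notin A)) /= [X in _ = _ + X]big1 ?addn0.
    by apply: eq_bigr => x _; rewrite !inE; case: (x \in N y); case: (x \in N y').
  move=> x; rewrite negbK => xA; rewrite !inE.
  move: yQ y'Q; rewrite !inE => /andP [_ /eqP Ey] /andP [_ /eqP Ey'].
  have : (x \in N y :&: A) = (x \in N y' :&: A) by rewrite Ey Ey'.
  by rewrite !inE xA !andbT => ->; case: (x \in N y').
have S3 : \sum_(y in Q U) \sum_(y' in Q U) #|N y' :\: N y| = \sum_(y in Q U) \sum_(y' in Q U) #|N y :\: N y'|.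
  by rewrite exchange_big.
have S4 : forall y, y \in Q U -> (q - 1) * delta.+1 <= \sum_(y' in Q U) #|symd (N y) (N y')|.
  move=> y yQ.
  have -> : q - 1 = \sum_(y' in Q U) (y' != y : nat).
    have -> : q - 1 = #|Q U :\ y| by rewrite /q (cardsD1 y (Q U)) yQ; lia.
    by rewrite -card_sum; apply: eq_card => z; rewrite !inE andbC.
  rewrite big_distrl /=; apply: leq_sum => y' y'Q; case: (eqVneq y' y) => [_|ne]; first by rewrite mul0n.
  rewrite mul1n; apply: sep.
  - by move: yQ; rewrite inE => /andP [].
  - by move: y'Q; rewrite inE => /andP [].
  - by rewrite eq_sym.
have S5 : q * ((q - 1) * delta.+1) <= \sum_(y in Q U) \sum_(y' in Q U) #|symd (N y) (N y')|.
  rewrite {1}(_ : q = \sum_(y in Q U) 1); last by rewrite sum1_card.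
  rewrite big_distrl /=; apply: leq_sum => y yQ; rewrite mul1n; exact: S4.
have S6 : \sum_(y in Q U) \sum_(y' in Q U) #|symd (N y) (N y')| = 2 * \sum_(x | x \notin A) a U x * b U x.
  rewrite S2 mul2n -addnn {1}S3 -big_split /=; apply: eq_bigr => y _.
  by rewrite -big_split /=; apply: eq_bigr => y' _; rewrite card_symd.
move: S5; rewrite S6 => S5.
apply: (@leq_trans (q * ((q-1) * delta.+1))); first by rewrite (mulnC delta.+1).
by apply: (leq_trans S5); rewrite mulnCA leq_mul2l S1 orbT.
Qed.

Lemma lower : delta.+1 * (#|Y'| - #|[set N y :&: A | y in Y']|) <=
  2 * \sum_(x | x \notin A) term N Y' (x |: A) x.
Proof.
rewrite (eq_bigr _ (fun x xA => L1 xA)) exchange_big /= big_distrr /=.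
apply: (@leq_trans (\sum_U delta.+1 * (#|Q U| - 1))); last by apply: leq_sum => U _; apply: L2.
rewrite -big_distrr /= leq_mul2l; apply/orP; right.
have E1 : \sum_U #|Q U| = #|Y'| by exact: (sum_w N Y' A).
have E2 : \sum_U (#|Q U| - 1) + \sum_U (0 < #|Q U| : nat) = \sum_U #|Q U|.
  rewrite -big_split; apply: eq_bigr => U _; case: #|Q U| => [|n] /=; lia.
have E3 : \sum_U (0 < #|Q U| : nat) <= #|[set N y :&: A | y in Y']|.
  apply: (@leq_trans #|[set U | 0 < #|Q U|]|).
    by rewrite -sum_mem; apply: eq_leq; apply: eq_bigr => U _; rewrite inE.
  apply: subset_leq_card; apply/subsetP => U; rewrite inE card_gt0.
  case/set0Pn => y; rewrite inE => /andP [yY /eqP <-]; exact: imset_f.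
apply: (@leq_trans (\sum_U #|Q U| - \sum_U (0 < #|Q U| : nat))); first by rewrite E1 leq_sub2l.
by rewrite -E2 addnK.
Qed.
End Low.

Lemma double_count (T : finType) (g : {set T} -> T -> nat) t :
  \sum_(B : {set T} | #|B| == t.+1) \sum_(x in B) g B x =
  \sum_(A : {set T} | #|A| == t) \sum_(x | x \notin A) g (x |: A) x.
Proof.
rewrite (exchange_big_dep predT) //= [RHS](exchange_big_dep predT) //=.
apply: eq_bigr => x _.
rewrite (reindex_onto (fun A => x |: A) (fun B => B :\ x)) /=; last first.
  by move=> B /andP [_ xB]; rewrite setD1K.
apply: eq_bigl => A; rewrite setU11 andbT.
case: (boolP (x \in A)) => xA /=.
  rewrite andbF; apply/negbTE; apply/negP => /andP [_ /eqP E].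
  by move: xA; rewrite -E !inE eqxx.
by rewrite setU1K // eqxx !andbT cardsU1 xA.
Qed.

Lemma sum_const_cond (I : finType) (P : pred I) c : \sum_(i | P i) c = #|[set i | P i]| * c.
Proof.
rewrite -sum1_card big_distrl /=; apply: congr_big => // i; first by rewrite inE.
by rewrite mul1n.
Qed.

Lemma pow_bound j : (j + 5) * (j + 5) < 2 ^ (j + 5).
Proof.
elim: j => [|j IH]; first by [].
rewrite addSn expnS; nia.
Qed.
From mathcomp Require Import ssralg ring.

Lemma trace_le (T : finType) (e : rel T) (S V : {set T}) :
  #|[set nbhd e y :&: V | y in S]| <= nbhd_complexity e #|V|.
Proof.
apply: (@leq_trans #|[set nbhd e v :&: V | v : T]|).
  by apply: subset_leq_card; apply: imsetS; apply/subsetP.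
by apply: (@leq_bigmax_cond _ (fun A : {set T} => #|A| == #|V|) (fun A => #|[set nbhd e v :&: A | v : T]|) V).
Qed.

Theorem lemma3p1 (r l : nat) (hr : 0 < r) (hl : 0 < l) :
  exists delta : nat,
    forall (T : finType) (e : rel T) (X Y : {set T}),
      simple_graph e ->
      bipartition e X Y ->
      (forall x x' : T, x \in X -> x' \in X -> x != x' -> ~ twins e x x') ->
      (forall m : nat, 0 < m -> nbhd_complexity e m <= r * m) ->
      forall Y' : {set T}, Y' \subset Y ->
        2 <= #|Y'| -> #|Y| <= l * #|Y'| ->
        exists u v : T, [/\ u \in Y', v \in Y', u != v & near_twins e delta u v].
Proof.
pose d := r + 4.
exists (8 * d * r * (r + 1) * l).
move=> T e X Y _ [XY0 XYT bip] twf cplx Y' sY k2 kl.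
set delta := 8 * d * r * (r + 1) * l.
set N := nbhd e.
case: (boolP [exists u in Y', exists v in Y', (u != v) && (#|symdiff (N u) (N v)| <= delta)]).
  case/exists_inP => u uY /exists_inP [v vY /andP [uv nt]].
  by exists u, v; split.
move=> hneg; exfalso.
have sep : forall y y', y \in Y' -> y' \in Y' -> y != y' -> delta < #|symd (N y) (N y')|.
  move=> y y' yY y'Y ne; rewrite ltnNge; apply/negP => h.
  move/negP: hneg; apply; apply/exists_inP; exists y => //; apply/exists_inP; exists y' => //.
  by rewrite ne.
set k := #|Y'|.
have Ypos : 0 < #|Y|.
  by apply: (@leq_trans #|Y'|); [lia | exact: subset_leq_card].
have hX : #|X| <= r * #|Y|.
  have NX : forall x, x \in X -> N x \subset Y.
    move=> x xX; apply/subsetP => z; rewrite inE => exz.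
    case: (bip _ _ exz) => [[_ //]|[xY _]].
    have : x \in X :&: Y by rewrite inE xX xY.
    by rewrite XY0 inE.
  apply: (@leq_trans #|[set N x :&: Y | x in X]|).
    rewrite card_in_imset // => x x' xX x'X E.
    case: (eqVneq x x') => // ne; exfalso; apply: (twf x x' xX x'X ne).
    by rewrite /twins -/N -(setIidPl (NX x xX)) -(setIidPl (NX x' x'X)).
  apply: (leq_trans (trace_le e X Y)); exact: cplx.
have hn : #|T| <= #|X| + #|Y|.
  by rewrite -cardsT -XYT cardsU leq_subr.
have hyp : forall V : {set T}, #|V| = d.+1 -> #|[set N y :&: V | y in Y']| < 2 ^ d.+1.
  move=> V cV; apply: (leq_ltn_trans (trace_le e Y' V)).
  apply: (leq_ltn_trans (cplx _ _)); first by rewrite cV.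
  have -> : (r + 4).+1 = r + 5 by lia.
  have := pow_bound r; rewrite /d; nia.
pose t := k %/ (2 * r).
have t_le : t <= #|T|.
  apply: (@leq_trans k); first by rewrite /t leq_div.
  by rewrite /k; apply: max_card.
have hf : forall A : {set T}, #|A| == t -> k <= 2 * (k - #|[set N y :&: A | y in Y']|).
  move=> A /eqP cA; case: (posnP t) => [t0|tpos].
    have A0 : A = set0 by apply: cards0_eq; rewrite cA.
    have : #|[set N y :&: A | y in Y']| <= 1.
      rewrite -(cards1 (set0 : {set T})); apply: subset_leq_card; apply/subsetP => U.
      by case/imsetP => y _ ->; rewrite A0 setI0 inE.
    lia.
  have f1 : #|[set N y :&: A | y in Y']| <= r * t.
    apply: (leq_trans (trace_le e Y' A)); rewrite cA; exact: cplx.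
  have f2 : t * (2 * r) <= k by apply: leq_trunc_div.
  lia.
set F := fun B x => term N Y' B x.
have up : \sum_(B : {set T} | #|B| == t.+1) \sum_(x in B) F B x <= 'C(#|T|, t.+1) * (d * k).
  apply: (@leq_trans (\sum_(B : {set T} | #|B| == t.+1) d * k)).
    apply: leq_sum => B _; apply: (leq_trans _ (@upper T N Y' d B hyp)).
    by rewrite [X in _ <= X](bigID (fun x => x \in B)) /= leq_addr.
  by rewrite sum_const_cond card_draws.
have lo : 'C(#|T|, t) * (delta.+1 * k) <=
    4 * \sum_(A : {set T} | #|A| == t) \sum_(x | x \notin A) F (x |: A) x.
  rewrite -card_draws -sum_const_cond big_distrr /=; apply: leq_sum => A cA.
  have L := lower sep A; have := hf A cA.
  rewrite /F; nia.
rewrite double_count in up.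
have key : 'C(#|T|, t) * (delta.+1 * k) * t.+1 <= 'C(#|T|, t) * (4 * (d * k) * (#|T| - t)).
  apply: (@leq_trans (4 * ('C(#|T|, t.+1) * (d * k)) * t.+1)).
    by rewrite leq_mul2r (leq_trans lo) ?orbT // leq_mul2l up orbT.
  have M := mul_bin_left #|T| t.
  move: M; generalize ('C(#|T|, t.+1)) ('C(#|T|, t)) (#|T| - t) (d * k) => c1 c0 m D M.
  apply: eq_leq; transitivity (4 * D * (t.+1 * c1)); first ring.
  rewrite M; ring.
have Cpos : 0 < 'C(#|T|, t) by rewrite bin_gt0.
have key2 : delta.+1 * k * t.+1 <= 4 * (d * k) * #|T|.
  have : delta.+1 * k * t.+1 <= 4 * (d * k) * (#|T| - t).
    by rewrite -(leq_pmul2l Cpos) mulnA.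
  move=> h; apply: (leq_trans h); by rewrite leq_mul2l leq_subr orbT.
have kpos : 0 < k by lia.
have key3 : delta.+1 * t.+1 <= 4 * d * #|T|.
  rewrite -(leq_pmul2r kpos).
  have E1 : delta.+1 * t.+1 * k = delta.+1 * k * t.+1 by ring.
  have E2 : 4 * d * #|T| * k = 4 * (d * k) * #|T| by ring.
  by rewrite E1 E2 key2.
have ceil : k < t.+1 * (2 * r) by apply: ltn_ceil; lia.
have nb : #|T| <= (r + 1) * l * k.
  apply: (@leq_trans ((r + 1) * #|Y|)); first by rewrite mulnDl mul1n; lia.
  by rewrite -mulnA leq_mul2l kl orbT.
have : 4 * d * #|T| < delta.+1 * t.+1.
  apply: (@leq_ltn_trans (4 * d * ((r + 1) * l * k))); first by rewrite leq_mul2l nb orbT.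
  have pos : 0 < 4 * d * ((r + 1) * l) by rewrite !muln_gt0 hl /d; lia.
  have E3 : 4 * d * ((r + 1) * l * k) = 4 * d * ((r + 1) * l) * k by ring.
  rewrite E3; apply: (@leq_trans (4 * d * ((r + 1) * l) * (t.+1 * (2 * r)))).
    by rewrite ltn_pmul2l.
  have E4 : 4 * d * ((r + 1) * l) * (t.+1 * (2 * r)) = delta * t.+1 by rewrite /delta; ring.
  by rewrite E4 leq_mul2r leqnSn orbT.
lia.
Qed.
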